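(* Let $a<b$, $F:(a,b)\to\mathcal{K}(\mathbb{R}^n)$, $x_0\in(a,b)$, and suppose $F$ is strongly metrically differentiable at $x_0$, i.e. $F$ is metrically differentiable at $x_0$ and there are $L>0$ and a right neighborhood and a left neighborhood of $x_0$ such that $\sup_{y\in F(x_0)}\mathrm{haus}([x_0,x]^MF|_y,D^M_+F(x_0)|_y)\le L|x-x_0|$ for $x$ in the right neighborhood with $x>x_0$, and $\sup_{y\in F(x_0)}\mathrm{haus}([x_0,x]^MF|_y,D^M_-F(x_0)|_y)\le L|x-x_0|$ for $x$ in the left neighborhood with $x<x_0$. Then $\mathrm{haus}(F(x),L^MF(x))=O(|x-x_0|^2)$ as $x\to x_0$.
   Context: $\mathcal{K}(\mathbb{R}^n)$ is the set of nonempty compact subsets of $\mathbb{R}^n$, $|\cdot|$ the Euclidean norm, $\mathrm{dist}(x,A)=\min_{a\in A}|x-a|$, $\mathrm{haus}$ the Hausdorff distance. For $a\in\mathbb{R}^n$, $B\in\mathcal{K}(\mathbb{R}^n)$, $\Pi_B(a)=\{b\in B:|a-b|=\mathrm{dist}(a,B)\}$; for $A,B\in\mathcal{K}(\mathbb{R}^n)$, $\Pi(A,B)=\{(a,b)\in A\times B: a\in\Pi_A(b)\text{ or }b\in\Pi_B(a)\}$. For $x\ne x_0$, $y_0\in F(x_0)$: $[x_0,x]^MF|_{y_0}=\{\frac{y-y_0}{x-x_0}:(y_0,y)\in\Pi(F(x_0),F(x))\}$. $F$ is metrically differentiable from the right at $x_0$ if for every $y\in F(x_0)$ there is a nonempty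 set $D^M_+F(x_0)|_y$ with $\sup_{y\in F(x_0)}\mathrm{haus}(D^M_+F(x_0)|_y,[x_0,x]^MF|_y)\to0$ as $x\to x_0^+$; from the left analogously with $D^M_-F(x_0)|_y$ and $x\to x_0^-$; metrically differentiable means both. The local metric linear approximant is $L^MF(x)=\bigcup_{y\in F(x_0)}\big(\{y\}+(x-x_0)D^M_+F(x_0)|_y\big)$ for $x\ge x_0$ and $L^MF(x)=\bigcup_{y\in F(x_0)}\big(\{y\}+(x-x_0)D^M_-F(x_0)|_y\big)$ for $x<x_0$, where $\{c\}+\lambda A=\{c+\lambda a:a\in A\}$. *)

(* Defs.v *)
From HB Require Import structures.
From mathcomp Require Import all_boot all_order all_algebra.
From mathcomp Require Import all_classical all_reals all_analysis.
Set Implicit Arguments. Unset Strict Implicit. Unset Printing Implicit Defensive.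
Import Order.TTheory GRing.Theory Num.Theory numFieldNormedType.Exports.
Local Open Scope classical_set_scope.
Local Open Scope ring_scope.

Section Defs.
Variables (R : realType) (n : nat).
Notation V := 'rV[R]_n.

Definition enorm (v : V) : R := Num.sqrt (\sum_(i < n) (v ord0 i) ^+ 2).

Definition Kset (A : set V) : Prop := compact A /\ A !=set0.

Definition edist (x : V) (A : set V) : \bar R :=
  ereal_inf [set (enorm (x - a))%:E | a in A].

Definition haus (A B : set V) : \bar R :=
  Order.max (ereal_sup [set edist a B | a in A])
            (ereal_sup [set edist b A | b in B]).

Definition proj (a : V) (B : set V) : set V :=
  [set b | B b /\ (enorm (a - b))%:E = edist a B].

Definition Pi (A B : set V) : set (V * V) :=
  [set p | A p.1 /\ B p.2 /\ (proj p.2 A p.1 \/ proj p.1 B p.2)].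

Definition mquot (F : R -> set V) (x0 x : R) (y0 : V) : set V :=
  [set (x - x0)^-1 *: (y - y0) | y in [set y | Pi (F x0) (F x) (y0, y)]].

Definition supdev (F : R -> set V) (D : V -> set V) (x0 x : R) : \bar R :=
  ereal_sup [set haus (D y) (mquot F x0 x y) | y in F x0].

Definition LMF (F : R -> set V) (Dp Dm : V -> set V) (x0 x : R) : set V :=
  [set z | exists2 y, F x0 y &
     exists2 d, (if x0 <= x then Dp y else Dm y) d & z = y + (x - x0) *: d].

End Defs.

(* Main.v *)
Require Import Defs.
From HB Require Import structures.
From mathcomp Require Import all_boot all_order all_algebra.
From mathcomp Require Import all_classical all_reals all_analysis.
Import Order.TTheory GRing.Theory Num.Theory numFieldNormedType.Exports.
Local Open Scope classical_set_scope.
Local Open Scope ring_scope.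
Section H.
Variables (R : realType) (n : nat).
Notation V := 'rV[R]_n.

Lemma enorm_ge0 (v : V) : 0 <= enorm v.
Proof. exact: sqrtr_ge0. Qed.

Lemma enormZ (c : R) (v : V) : enorm (c *: v) = `|c| * enorm v.
Proof.
rewrite /enorm.
under eq_bigr do rewrite mxE exprMn.
by rewrite -mulr_sumr sqrtrM ?sqr_ge0 // sqrtr_sqr.
Qed.

Lemma enorm_cont (z : V) : continuous (fun v : V => enorm (z - v)).
Proof.
have -> : (fun v : V => enorm (z - v)) =
  (fun v : V => Num.sqrt (\sum_(i < n) (z ord0 i - v ord0 i) ^+ 2)).
  by apply: funext => v; rewrite /enorm; under eq_bigr do rewrite !mxE.
have Hs : forall s : seq 'I_n, continuous (fun v : V => \sum_(i <- s) (z ord0 i - v ord0 i) ^+ 2).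
  elim => [|i s IH].
    have -> : (fun v : V => \sum_(i <- [::]) (z ord0 i - v ord0 i) ^+ 2) = fun _ => 0.
      by apply: funext => v; rewrite big_nil.
    move=> v; exact: cst_continuous.
  have -> : (fun v : V => \sum_(j <- i :: s) (z ord0 j - v ord0 j) ^+ 2) =
    (fun v : V => (z ord0 i - v ord0 i) ^+ 2 + \sum_(j <- s) (z ord0 j - v ord0 j) ^+ 2).
    by apply: funext => v; rewrite big_cons.
  have h1 : continuous (fun v : V => (z ord0 i - v ord0 i) ^+ 2).
    move=> w.
    have hf : {for w, continuous (fun v : V => z ord0 i - v ord0 i)}.
      have := @continuousB R R^o V (fun _ => z ord0 i) (fun v : V => v ord0 i) w
        (@cst_continuous _ _ _ w) (@coord_continuous R 1 n ord0 i w).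
      by [].
    exact: (continuous_comp hf (@exprn_continuous R 2 _)).
  move=> v; have := @continuousD R R^o V (fun v : V => (z ord0 i - v ord0 i) ^+ 2)
     (fun v : V => \sum_(j <- s) (z ord0 j - v ord0 j) ^+ 2) v (h1 v) (IH v).
  by [].
move=> v; apply: continuous_comp; last exact: sqrt_continuous.
exact: Hs.
Qed.


Lemma edist_le (x a : V) (A : set V) : A a -> (Defs.edist x A <= (enorm (x - a)%R)%:E)%E.
Proof. by move=> Aa; rewrite /Defs.edist; apply: ereal_inf_lbound; exists a. Qed.

Lemma minimizer (z : V) (A : set V) : Kset A ->
  exists2 y, A y & Defs.edist z A = (enorm (z - y)%R)%:E.
Proof.
move=> [cA nA].
have [c cA' cmin] := compact_EVT_min nA cA
  (continuous_subspaceT (A := A) (enorm_cont z)).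
rewrite inE in cA'.
exists c => //; apply/eqP; rewrite eq_le; apply/andP; split.
  exact: edist_le.
apply: le_ereal_inf_tmp => _ [a Aa <-].
by rewrite lee_fin; apply: cmin; rewrite inE.
Qed.

Lemma haus_left (A B : set V) (r : R) a e : (haus A B <= r%:E)%E -> A a -> 0 < e ->
  exists2 b, B b & enorm (a - b) < r + e.
Proof.
move=> hr Aa e0.
have h1 : (Defs.edist a B < (r + e)%:E)%E.
  apply: (le_lt_trans _ (_ : r%:E < (r + e)%:E)%E); last by rewrite lte_fin ltrDl.
  apply: le_trans hr; rewrite /haus le_max; apply/orP; left.
  by apply: ereal_sup_ubound; exists a.
have [_ [b Bb <-]] := ereal_inf_lt h1.
by rewrite lte_fin => ?; exists b.
Qed.

Lemma haus_right (A B : set V) (r : R) b e : (haus A B <= r%:E)%E -> B b -> 0 < e ->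
  exists2 a, A a & enorm (b - a) < r + e.
Proof.
move=> hr Bb e0.
have h1 : (Defs.edist b A < (r + e)%:E)%E.
  apply: (le_lt_trans _ (_ : r%:E < (r + e)%:E)%E); last by rewrite lte_fin ltrDl.
  apply: le_trans hr; rewrite /haus le_max; apply/orP; right.
  by apply: ereal_sup_ubound; exists b.
have [_ [a Aa <-]] := ereal_inf_lt h1.
by rewrite lte_fin => ?; exists a.
Qed.

Lemma supdev_le (F : R -> set V) (D : V -> set V) x0 x (r : \bar R) y : (supdev F D x0 x <= r)%E -> F x0 y ->
  (haus (D y) (mquot F x0 x y) <= r)%E.
Proof. by move=> h Fy; apply: le_trans h; apply: ereal_sup_ubound; exists y. Qed.

Lemma core (F : R -> set V) (D : V -> set V) x0 x (r : R) :
  x != x0 -> Kset (F x0) -> (supdev F D x0 x <= r%:E)%E ->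
  (haus (F x) [set z | exists2 y, F x0 y &
     exists2 d, D y d & (z = y + (x - x0) *: d)%R] <= (`|x - x0| * r)%R%:E)%E.
Proof.
move=> hx K0 hs.
set h := x - x0.
have h0 : h != 0 by rewrite subr_eq0.
have ah0 : 0 < `|h| by rewrite normr_gt0.
have hq : forall y z : V, h *: (h^-1 *: (z - y)) = z - y.
  by move=> y z; rewrite scalerA mulfV // scale1r.
rewrite /haus ge_max; apply/andP; split; apply: ge_ereal_sup => _ [z Fz <-].
- have [y Fy ey] := @minimizer z _ K0.
  apply/lee_addgt0Pr => e e0.
  have e'0 : 0 < e / `|h| by rewrite divr_gt0.
  have Hq : mquot F x0 x y (h^-1 *: (z - y)).
    by exists z => //; split => //; split => //; left.
  have [d Dd hd] := @haus_right _ _ _ _ _ (@supdev_le _ _ _ _ _ _ hs Fy) Hq e'0.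
  apply: (le_trans (@edist_le z (y + h *: d) _ _)).
    by exists y => //; exists d.
  rewrite -EFinD lee_fin.
  have -> : z - (y + h *: d) = h *: (h^-1 *: (z - y) - d).
    by rewrite scalerBr hq opprD addrA.
  rewrite enormZ.
  have -> : `|h| * r + e = `|h| * (r + e / `|h|).
    by rewrite mulrDr mulrCA mulfV ?mulr1 // gt_eqF.
  by rewrite ler_pM2l // ltW.
- case: z Fz => [w [y Fy [d Dd ->]]].
  apply/lee_addgt0Pr => e e0.
  have e'0 : 0 < e / `|h| by rewrite divr_gt0.
  have [_ [z [_ [Fz _]] <-] hd] := @haus_left _ _ _ _ _ (@supdev_le _ _ _ _ _ _ hs Fy) Dd e'0.
  apply: (le_trans (@edist_le _ z _ Fz)).
  rewrite -EFinD lee_fin.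
  have -> : y + h *: d - z = h *: (d - h^-1 *: (z - y)).
    by rewrite scalerBr hq opprB addrA (addrC (h *: d) y).
  rewrite enormZ.
  have -> : `|h| * r + e = `|h| * (r + e / `|h|).
    by rewrite mulrDr mulrCA mulfV ?mulr1 // gt_eqF.
  by rewrite ler_pM2l // ltW.
Qed.

End H.

Lemma enorm0 (R : realType) (n : nat) : enorm (0 : 'rV[R]_n) = 0.
Proof. by rewrite -(scale0r (0 : 'rV[R]_n)) enormZ normr0 mul0r. Qed.

Theorem mainTheorem4 (R : realType) (n : nat) (a b : R)
  (F : R -> set 'rV[R]_n) (x0 : R) (Dp Dm : 'rV[R]_n -> set 'rV[R]_n) :
  a < b ->
  (forall x, a < x < b -> Kset (F x)) ->
  a < x0 < b ->
  (* metric differentiability at x0 (from the right and from the left) *)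
  (forall y, F x0 y -> Dp y !=set0) ->
  (forall y, F x0 y -> Dm y !=set0) ->
  (forall eps : R, 0 < eps -> exists2 delta : R, 0 < delta &
     forall x, x0 < x < b -> x - x0 < delta ->
       (supdev F Dp x0 x <= eps%:E)%E) ->
  (forall eps : R, 0 < eps -> exists2 delta : R, 0 < delta &
     forall x, a < x < x0 -> x0 - x < delta ->
       (supdev F Dm x0 x <= eps%:E)%E) ->
  (* strong metric differentiability: Lipschitz-type bounds *)
  (exists L : R, 0 < L /\ exists2 delta : R, 0 < delta &
     (forall x, x0 < x < b -> x - x0 < delta ->
        (supdev F Dp x0 x <= (L * `|x - x0|)%:E)%E) /\
     (forall x, a < x < x0 -> x0 - x < delta ->
        (supdev F Dm x0 x <= (L * `|x - x0|)%:E)%E)) ->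
  (* conclusion: haus(F x, L^M F(x)) = O(|x - x0|^2) as x -> x0 *)
  exists C : R, exists2 delta : R, 0 < delta &
    forall x, a < x < b -> `|x - x0| < delta ->
      (haus (F x) (LMF F Dp Dm x0 x) <= (C * `|x - x0| ^+ 2)%:E)%E.
Proof.
move=> ab KF ax0 Dpne Dmne _ _ [L [L0 [delta d0 [HR HL]]]].
have K0 : Kset (F x0) by apply: KF.
move/andP: ax0 => [ax0 x0b].
exists L, delta => // x /andP[ax xb] hx.
case: (ltgtP x x0) => [xlt|xgt|->].
- have hx' : x0 - x < delta by move: hx; rewrite ltr0_norm ?subr_lt0 // opprB.
  have Hs := HL x (introT andP (conj ax xlt)) hx'.
  have EL : LMF F Dp Dm x0 x = [set z | exists2 y, F x0 y &
     exists2 d, Dm y d & (z = y + (x - x0) *: d)%R].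
    by rewrite /LMF leNgt xlt.
  rewrite EL; apply: le_trans (@core R n F Dm x0 x _ _ K0 Hs) _.
    by rewrite lt_eqF.
  by rewrite lee_fin mulrCA expr2.
- have hx' : x - x0 < delta by move: hx; rewrite gtr0_norm // subr_gt0.
  have Hs := HR x (introT andP (conj xgt xb)) hx'.
  have EL : LMF F Dp Dm x0 x = [set z | exists2 y, F x0 y &
     exists2 d, Dp y d & (z = y + (x - x0) *: d)%R].
    by rewrite /LMF (ltW xgt).
  rewrite EL; apply: le_trans (@core R n F Dp x0 x _ _ K0 Hs) _.
    by rewrite gt_eqF.
  by rewrite lee_fin mulrCA expr2.
- rewrite subrr normr0 expr0n mulr0 /LMF lexx.
  rewrite /haus ge_max; apply/andP; split; apply: ge_ereal_sup => _ [z Fz <-].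
  + have [d Dd] := Dpne z Fz.
    apply: le_trans (@edist_le R n z z _ _) _.
      by exists z => //; exists d => //; rewrite subrr scale0r addr0.
    by rewrite subrr enorm0.
  + case: z Fz => [w [y Fy [d Dd ->]]].
    apply: le_trans (@edist_le R n _ y _ Fy) _.
    by rewrite subrr scale0r addr0 subrr enorm0.
Qed.
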